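(* For the quasi-random router for any transition matrix $P$, $$\left|I_{v,u}[z,z')-(z'-z)P_{v,u}\right|\le 2\lg(z'-z+1)$$ for all $v,u\in V$ and all $z,z'\in\mathbb{Z}_{\ge0}$ with $z'>z$.
   Context: $V=\{1,\dots,N\}$, $P$ a stochastic $N\times N$ matrix, $\mathcal N(v)=\{u:P_{v,u}>0\}$, $\delta(v)=|\mathcal N(v)|$; $\lg=\log_2$. The van der Corput function $\psi:\mathbb{Z}_{\ge0}\to[0,1)$ is $\psi(0)=0$ and, for $i>0$ written in binary as $i=\sum_{j=0}^{\lfloor\lg i\rfloor}\beta_j(i)2^j$ with $\beta_j(i)\in\{0,1\}$, $\psi(i)=\sum_{j=0}^{\lfloor\lg i\rfloor}\beta_j(i)2^{-(j+1)}$. The quasi-random router: fix an ordering $u_1,\dots,u_{\delta(v)}$ of $\mathcal N(v)$ and set $\sigma_v(i)=u_k$ where $k$ is such that $\sum_{j=1}^{k-1}P_{v,u_j}\le\psi(i)<\sum_{j=1}^{k}P_{v,u_j}$. $I_{v,u}[z,z')=|\{j\in\{z,\dots,z'-1\}:\sigma_v(j)=u\}|$. *)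

(* Defs.v *)
From Stdlib Require Import Reals Lra Lia Arith List.
Open Scope R_scope.

Definition inV (N v : nat) : Prop := (1 <= v <= N)%nat.

Definition sumR (f : nat -> R) (l : list nat) : R := fold_right Rplus 0 (map f l).

Definition stochastic (N : nat) (P : nat -> nat -> R) : Prop :=
  (forall v u, inV N v -> inV N u -> 0 <= P v u) /\
  (forall v, inV N v -> sumR (P v) (seq 1 N) = 1).

Definition lg (x : R) : R := ln x / ln 2.

Definition beta (j i : nat) : R := if Nat.testbit i j then 1 else 0.

Definition psi (i : nat) : R :=
  match i with
  | O => 0
  | S _ => sumR (fun j => beta j i * (/ 2) ^ (S j)) (seq 0 (S (Nat.log2 i)))
  end.

Definition is_nbr_ordering (N : nat) (P : nat -> nat -> R) (v : nat) (ord : list nat) : Prop :=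
  NoDup ord /\ (forall u, In u ord <-> (inV N u /\ 0 < P v u)).

(* sigma_v(i) = u_k where sum_{j<k} P_{v,u_j} <= psi(i) < sum_{j<=k} P_{v,u_j}
   (0-based index k here: u_{k+1} = nth k ord) *)
Definition is_qr_router (P : nat -> nat -> R) (v : nat) (ord : list nat)
    (sigma_v : nat -> nat) : Prop :=
  forall i, exists k, (k < length ord)%nat /\ sigma_v i = nth k ord 0%nat /\
    sumR (P v) (firstn k ord) <= psi i < sumR (P v) (firstn (S k) ord).

Definition Icount (sigma_v : nat -> nat) (u z z' : nat) : nat :=
  length (filter (fun j => Nat.eqb (sigma_v j) u) (seq z (z' - z))).

(* Main.v *)
Require Import Defs.
From Stdlib Require Import Reals Lra Lia Arith List Permutation.
Open Scope R_scope.

Lemma sumR_nil f : sumR f nil = 0. Proof. reflexivity. Qed.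
Lemma sumR_cons f a l : sumR f (a :: l) = f a + sumR f l. Proof. reflexivity. Qed.
Lemma sumR_app f l1 l2 : sumR f (l1 ++ l2) = sumR f l1 + sumR f l2.
Proof. induction l1; simpl; [unfold sumR; simpl; lra|]. rewrite !sumR_cons, IHl1. lra. Qed.
Lemma sumR_map f g l : sumR f (map g l) = sumR (fun x => f (g x)) l.
Proof. induction l; [reflexivity|]. simpl. rewrite !sumR_cons, IHl. reflexivity. Qed.
Lemma sumR_ext f g l : (forall x, f x = g x) -> sumR f l = sumR g l.
Proof. intros H; induction l; [reflexivity|]. rewrite !sumR_cons, IHl, H. reflexivity. Qed.
Lemma sumR_scale f c l : sumR (fun x => f x * c) l = sumR f l * c.
Proof. induction l; [unfold sumR; simpl; lra|]. rewrite !sumR_cons, IHl. lra. Qed.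

Definition T (K i : nat) : R := sumR (fun j => beta j i * (/ 2) ^ (S j)) (seq 0 K).

Lemma mod2_cases i : (i mod 2 = 0 \/ i mod 2 = 1)%nat.
Proof. pose proof (Nat.mod_upper_bound i 2). lia. Qed.

Lemma T_S K i : T (S K) i = INR (i mod 2) / 2 + T K (i / 2) / 2.
Proof.
  unfold T. change (seq 0 (S K)) with (0%nat :: seq 1 K).
  rewrite sumR_cons, <- seq_shift, sumR_map.
  unfold Rdiv; rewrite <- sumR_scale.
  f_equal.
  - unfold beta. rewrite <- Nat.bit0_mod. destruct (Nat.testbit i 0); simpl; lra.
  - apply sumR_ext. intro j. unfold beta. rewrite Nat.div2_bits. simpl. lra.
Qed.

Lemma T_bound K i : 0 <= T K i <= 1 - (/2) ^ K.
Proof.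
  revert i; induction K; intro i.
  - unfold T; simpl; unfold sumR; simpl; lra.
  - rewrite T_S. specialize (IHK (i/2)%nat). rewrite <- tech_pow_Rmult.
    destruct (mod2_cases i) as [E|E]; rewrite E; simpl INR; lra.
Qed.

Lemma T_succ_top K i : (Nat.log2 i < K)%nat -> T (S K) i = T K i.
Proof.
  intro H. unfold T. rewrite seq_S, sumR_app, sumR_cons, sumR_nil.
  unfold beta. rewrite Nat.bits_above_log2 by lia. lra.
Qed.

Lemma psi_T i : psi i = T (S (Nat.log2 i)) i.
Proof. destruct i; [|reflexivity]. unfold T, sumR, beta; simpl; lra. Qed.

Lemma T_psi K i : (S (Nat.log2 i) <= K)%nat -> T K i = psi i.
Proof.
  induction K; intro H; [lia|].
  destruct (Nat.eq_dec (S (Nat.log2 i)) (S K)) as [E|E].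
  - rewrite psi_T, E. reflexivity.
  - rewrite T_succ_top by lia. apply IHK. lia.
Qed.

Lemma psi_bound i : 0 <= psi i < 1.
Proof.
  rewrite psi_T. pose proof (T_bound (S (Nat.log2 i)) i).
  pose proof (pow_lt (/2) (S (Nat.log2 i)) ltac:(lra)). lra.
Qed.

Lemma psi_rec i : psi i = INR (i mod 2) / 2 + psi (i / 2) / 2.
Proof.
  rewrite <- (T_psi (S (S (Nat.log2 i))) i) by lia.
  rewrite T_S, T_psi; [reflexivity|].
  pose proof (Nat.log2_le_mono (i/2) i ltac:(pose proof (Nat.div_mod_eq i 2); lia)). lia.
Qed.

Fixpoint cell (m i : nat) : nat :=
  match m with O => O | S m' => (i mod 2 * 2 ^ m' + cell m' (i / 2))%nat end.

Lemma cell_lt m i : (cell m i < 2 ^ m)%nat.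
Proof.
  revert i; induction m; intro i; [simpl; lia|]. cbn [cell].
  specialize (IHm (i/2)%nat). change (2 ^ S m)%nat with (2 * 2 ^ m)%nat.
  destruct (mod2_cases i) as [E|E]; rewrite E; lia.
Qed.

Lemma cell_psi m i : INR (cell m i) <= 2 ^ m * psi i < INR (cell m i) + 1.
Proof.
  revert i; induction m; intro i.
  - simpl. pose proof (psi_bound i). lra.
  - specialize (IHm (i/2)%nat). cbn [cell]. rewrite plus_INR, mult_INR, pow_INR.
    replace (INR 2) with 2 by (simpl; lra).
    replace (2 ^ S m * psi i) with (INR (i mod 2) * 2 ^ m + 2 ^ m * psi (i/2))
      by (rewrite (psi_rec i); simpl; field).
    lra.
Qed.

Lemma cell_inj m i i' : (i < i' + 2 ^ m)%nat -> (i' < i + 2 ^ m)%nat ->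
  cell m i = cell m i' -> i = i'.
Proof.
  revert i i'; induction m; intros i i' H1 H2 H3; [simpl in *; lia|].
  cbn [cell] in H3. pose proof (cell_lt m (i/2)). pose proof (cell_lt m (i'/2)).
  change (2 ^ S m)%nat with (2 * 2 ^ m)%nat in *.
  set (Q := (2 ^ m)%nat) in *.
  pose proof (Nat.div_mod_eq i 2). pose proof (Nat.div_mod_eq i' 2).
  assert (Em : i mod 2 = i' mod 2).
  { destruct (mod2_cases i) as [E|E]; destruct (mod2_cases i') as [E'|E'];
      rewrite E, E' in H3; lia. }
  rewrite Em in H3. assert (Ec : cell m (i/2) = cell m (i'/2)) by lia.
  pose proof (mod2_cases i).
  assert (i / 2 = i' / 2)%nat by (apply IHm; [lia|lia|exact Ec]).
  lia.
Qed.

Definition Rltb (x y : R) : bool := if Rlt_dec x y then true else false.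
Lemma Rltb_spec x y : Rltb x y = true <-> x < y.
Proof. unfold Rltb; destruct (Rlt_dec x y); split; intros; try congruence; lra. Qed.

Lemma filter_len_mono {A} (f g : A -> bool) l :
  (forall x, In x l -> f x = true -> g x = true) ->
  (length (filter f l) <= length (filter g l))%nat.
Proof.
  induction l as [|a l IH]; intro H; simpl; [lia|].
  assert (IH' := IH (fun x Hx => H x (or_intror Hx))).
  destruct (f a) eqn:Ef; [rewrite (H a (or_introl eq_refl) Ef); simpl; lia|].
  destruct (g a); simpl; lia.
Qed.

Lemma filter_len_perm {A} (f : A -> bool) l l' :
  Permutation l l' -> length (filter f l) = length (filter f l').
Proof.
  induction 1; simpl; auto.
  - destruct (f x); simpl; auto.
  - destruct (f x), (f y); simpl; auto.
  - congruence.
Qed.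

Lemma filter_len_map {A B} (f : B -> bool) (g : A -> B) l :
  length (filter f (map g l)) = length (filter (fun x => f (g x)) l).
Proof. induction l; simpl; auto. destruct (f (g a)); simpl; auto. Qed.

Lemma count_lt_seq d M : length (filter (fun k => Nat.ltb k d) (seq 0 M)) = Nat.min d M.
Proof.
  induction M; [simpl; lia|].
  rewrite seq_S, filter_app, length_app, IHM. simpl.
  destruct (Nat.ltb_spec M d); simpl; lia.
Qed.

Lemma count_cell m z d :
  length (filter (fun i => Nat.ltb (cell m i) d) (seq z (2 ^ m))) = Nat.min d (2 ^ m).
Proof.
  rewrite <- (filter_len_map (fun k => Nat.ltb k d) (cell m)).
  rewrite <- count_lt_seq. apply filter_len_perm.
  apply NoDup_Permutation_bis.
  - apply FinFun.Injective_map_NoDup_in; [|apply seq_NoDup].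
    intros x y Hx Hy E. apply in_seq in Hx, Hy. apply (cell_inj m); lia.
  - rewrite length_map, !length_seq. lia.
  - intros k Hk. apply in_map_iff in Hk. destruct Hk as [i [<- _]].
    apply in_seq. pose proof (cell_lt m i). lia.
Qed.

Definition cntlt (z n : nat) (x : R) : nat :=
  length (filter (fun j => Rltb (psi j) x) (seq z n)).

Lemma cntlt_add z n1 n2 x : cntlt z (n1 + n2) x = (cntlt z n1 x + cntlt (z + n1) n2 x)%nat.
Proof. unfold cntlt. rewrite seq_app, filter_app, length_app. reflexivity. Qed.

Lemma nat_floor M : (1 <= M)%nat -> forall y, 0 <= y <= INR M ->
  exists c, (c < M)%nat /\ INR c <= y <= INR c + 1.
Proof.
  induction M; intros HM y Hy; [lia|].
  destruct (Nat.eq_dec M 0) as [->|HM0].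
  - exists 0%nat. simpl in *. split; [lia|lra].
  - destruct (Rle_dec y (INR M)).
    + destruct (IHM ltac:(lia) y ltac:(lra)) as [c [Hc Hc']]. exists c. split; [lia|lra].
    + exists M. rewrite S_INR in Hy. split; [lia|lra].
Qed.

Lemma Rabs_le_inv x e : Rabs x <= e -> -e <= x <= e.
Proof. unfold Rabs; destruct (Rcase_abs x); lra. Qed.

Lemma block x m z : 0 <= x <= 1 -> Rabs (INR (cntlt z (2 ^ m) x) - 2 ^ m * x) <= 1.
Proof.
  intros Hx.
  assert (HM : 0 < 2 ^ m) by (apply pow_lt; lra).
  assert (HMn : INR (2 ^ m) = 2 ^ m) by (rewrite pow_INR; simpl INR; f_equal; lra).
  destruct (nat_floor (2 ^ m) ltac:(pose proof (Nat.pow_nonzero 2 m); lia) (2 ^ m * x))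
    as [c [Hc [Hc1 Hc2]]].
  { rewrite HMn. split; [nra|nra]. }
  assert (L : (c <= cntlt z (2 ^ m) x)%nat).
  { replace c with (Nat.min c (2 ^ m)) at 1 by lia. rewrite <- (count_cell m z c).
    apply filter_len_mono. intros i _ Hi. apply Nat.ltb_lt in Hi. apply Rltb_spec.
    pose proof (cell_psi m i).
    assert (INR (cell m i) + 1 <= INR c) by (rewrite <- S_INR; apply le_INR; lia).
    apply (Rmult_lt_reg_l (2 ^ m)); lra. }
  assert (U : (cntlt z (2 ^ m) x <= S c)%nat).
  { replace (S c) with (Nat.min (S c) (2 ^ m)) by lia. rewrite <- (count_cell m z (S c)).
    apply filter_len_mono. intros i _ Hi. apply Rltb_spec in Hi. apply Nat.ltb_lt.
    pose proof (cell_psi m i). apply INR_lt. rewrite S_INR.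
    assert (2 ^ m * psi i < 2 ^ m * x) by (apply Rmult_lt_compat_l; lra). lra. }
  apply le_INR in L. apply le_INR in U. rewrite S_INR in U.
  apply Rabs_le. lra.
Qed.

Definition inab (a b y : R) : bool := Rltb y b && negb (Rltb y a).

Definition cntab (z n : nat) (a b : R) : nat :=
  length (filter (fun j => inab a b (psi j)) (seq z n)).

Lemma cntab_split a b z n : a <= b -> cntlt z n b = (cntab z n a b + cntlt z n a)%nat.
Proof.
  intro Hab. unfold cntlt, cntab. induction (seq z n) as [|j l IH]; [reflexivity|].
  cbn [filter]. unfold inab at 1.
  destruct (Rltb (psi j) b) eqn:E1, (Rltb (psi j) a) eqn:E2; simpl; try lia.
  apply Rltb_spec in E2. assert (Rltb (psi j) b = true) by (apply Rltb_spec; lra). congruence.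
Qed.

Lemma ln2_pos : 0 < ln 2.
Proof. pose proof ln_lt_2. lra. Qed.

Lemma lg_mono x y : 0 < x -> x <= y -> lg x <= lg y.
Proof.
  intros Hx Hxy. unfold lg, Rdiv. apply Rmult_le_compat_r.
  - left. apply Rinv_0_lt_compat, ln2_pos.
  - destruct Hxy as [H|H]; [left; apply ln_increasing; lra|right; congruence].
Qed.

Lemma lg_double x : 0 < x -> lg (2 * x) = 1 + lg x.
Proof.
  intro Hx. unfold lg. rewrite ln_mult by lra. pose proof ln2_pos. field. lra.
Qed.

Lemma lg_nonneg x : 1 <= x -> 0 <= lg x.
Proof. intro H. rewrite <- (Rmult_0_l (/ ln 2)). unfold lg, Rdiv.
  apply Rmult_le_compat_r; [left; apply Rinv_0_lt_compat, ln2_pos|].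
  rewrite <- ln_1. destruct H as [H|H]; [left; apply ln_increasing; lra|right; congruence].
Qed.

Definition Dv (a b : R) (z n : nat) : R :=
  (INR (cntlt z n b) - INR n * b) - (INR (cntlt z n a) - INR n * a).

Lemma mainD a b : 0 <= a <= 1 -> 0 <= b <= 1 ->
  forall n z, Rabs (Dv a b z n) <= 2 * lg (INR n + 1).
Proof.
  intros Ha Hb n. induction n as [n IH] using (well_founded_induction lt_wf). intro z.
  destruct (Nat.eq_dec n 0) as [->|Hn0].
  - unfold Dv, cntlt. simpl. rewrite Rplus_0_l. unfold lg. rewrite ln_1.
    replace (0 - 0 * b - (0 - 0 * a)) with 0 by ring. unfold Rdiv. rewrite Rmult_0_l, Rmult_0_r.
    rewrite Rabs_R0. lra.
  - pose proof (Nat.log2_spec n ltac:(lia)) as [HM1 HM2].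
    set (m := Nat.log2 n) in *. set (M := (2 ^ m)%nat) in *.
    change (2 ^ S m)%nat with (2 * M)%nat in HM2.
    set (r := (n - M)%nat).
    assert (En : n = (M + r)%nat) by lia.
    assert (Hr : (r < n)%nat) by (pose proof (Nat.pow_nonzero 2 m); unfold M in *; lia).
    specialize (IH r Hr (z + M)%nat).
    assert (Hd : Dv a b z n = Dv a b z M + Dv a b (z + M) r).
    { unfold Dv. rewrite En, !cntlt_add, !plus_INR. ring. }
    assert (HMn : INR M = 2 ^ m) by (unfold M; rewrite pow_INR; simpl INR; f_equal; lra).
    assert (Bl : Rabs (Dv a b z M) <= 2).
    { pose proof (block b m z Hb). pose proof (block a m z Ha).
      unfold Dv. rewrite HMn. unfold M.
      apply Rabs_le_inv in H, H0. apply Rabs_le. lra. }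
    rewrite Hd. eapply Rle_trans; [apply Rabs_triang|].
    assert (Hlg : 1 + lg (INR r + 1) <= lg (INR n + 1)).
    { rewrite <- lg_double by (pose proof (pos_INR r); lra). apply lg_mono.
      - pose proof (pos_INR r); lra.
      - rewrite En, plus_INR. assert (INR r + 1 <= INR M).
        { rewrite <- S_INR. apply le_INR. unfold r; lia. } lra. }
    lra.
Qed.

Lemma sumR_firstn_S f l k : (k < length l)%nat ->
  sumR f (firstn (S k) l) = sumR f (firstn k l) + f (nth k l 0%nat).
Proof.
  revert k; induction l as [|x l IH]; intros k Hk; simpl in Hk; [lia|].
  destruct k.
  - simpl. rewrite sumR_cons, !sumR_nil. lra.
  - change (firstn (S (S k)) (x :: l)) with (x :: firstn (S k) l).
    change (firstn (S k) (x :: l)) with (x :: firstn k l).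
    rewrite !sumR_cons, IH by lia. simpl. lra.
Qed.

Lemma sumR_firstn_mono f l : (forall x, In x l -> 0 <= f x) ->
  forall k k', (k <= k')%nat -> sumR f (firstn k l) <= sumR f (firstn k' l).
Proof.
  induction l as [|x l IH]; intros H k k' Hk.
  - destruct k, k'; simpl; lra.
  - assert (H' : forall y, In y l -> 0 <= f y) by (intros; apply H; right; auto).
    destruct k, k'; try lia.
    + lra.
    + simpl. rewrite sumR_cons. pose proof (IH H' 0%nat k' ltac:(lia)). simpl in H0.
      rewrite sumR_nil in *. pose proof (H x (or_introl eq_refl)). lra.
    + simpl. rewrite !sumR_cons. pose proof (IH H' k k' ltac:(lia)). lra.
Qed.

Lemma sumR_firstn_le f l k : (forall x, In x l -> 0 <= f x) ->
  sumR f (firstn k l) <= sumR f l.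
Proof.
  intro H. destruct (le_lt_dec k (length l)).
  - rewrite <- (firstn_all l) at 2. apply sumR_firstn_mono; auto.
  - rewrite firstn_all2 by lia. lra.
Qed.

Lemma sumR_perm f l l' : Permutation l l' -> sumR f l = sumR f l'.
Proof. induction 1; rewrite ?sumR_cons; try lra. Qed.

Lemma sumR_filter_zero f (p : nat -> bool) l :
  (forall x, In x l -> p x = false -> f x = 0) -> sumR f (filter p l) = sumR f l.
Proof.
  induction l as [|x l IH]; intro H; [reflexivity|]. simpl.
  assert (IH' := IH (fun y Hy => H y (or_intror Hy))).
  destruct (p x) eqn:E; rewrite ?sumR_cons, IH'; [lra|].
  rewrite (H x (or_introl eq_refl) E). lra.
Qed.

Lemma filter_false_nil {A} (f : A -> bool) l : (forall x, In x l -> f x = false) -> filter f l = nil.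
Proof.
  induction l as [|x l IH]; intro H; [reflexivity|]. simpl.
  rewrite (H x (or_introl eq_refl)). apply IH. intros; apply H; right; auto.
Qed.

Lemma inab_spec a b y : inab a b y = true <-> a <= y < b.
Proof.
  unfold inab. rewrite Bool.andb_true_iff, Bool.negb_true_iff, Rltb_spec.
  split; intros [H1 H2]; split; auto.
  - destruct (Rltb y a) eqn:E; [discriminate|]. destruct (Rle_dec a y); auto.
    exfalso. assert (Rltb y a = true) by (apply Rltb_spec; lra). congruence.
  - destruct (Rltb y a) eqn:E; auto. apply Rltb_spec in E. lra.
Qed.

Theorem lemma5p5 (N : nat) (P : nat -> nat -> R) (hP : stochastic N P)
  (ord : nat -> list nat) (hord : forall v, inV N v -> is_nbr_ordering N P v (ord v))
  (sigma : nat -> nat -> nat)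
  (hsigma : forall v, inV N v -> is_qr_router P v (ord v) (sigma v)) :
  forall v u z z' : nat, inV N v -> inV N u -> (z < z')%nat ->
    Rabs (INR (Icount (sigma v) u z z') - INR (z' - z) * P v u)
      <= 2 * lg (INR (z' - z + 1)).
Proof.
  intros v u z z' Hv Hu Hz.
  destruct (hord v Hv) as [ND Hin]. destruct hP as [Pnn Psum].
  specialize (hsigma v Hv). unfold is_qr_router in hsigma.
  set (l := ord v) in *.
  assert (Hnn : forall x, In x l -> 0 <= P v x) by (intros x Hx; apply Hin in Hx; lra).
  rewrite plus_INR. replace (INR 1) with 1 by reflexivity.
  destruct (Rlt_dec 0 (P v u)) as [Hpos|Hnpos].
  -
    set (pos := fun w => if Rlt_dec 0 (P v w) then true else false).
    assert (Htot : sumR (P v) l = 1).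
    { rewrite <- (Psum v Hv). rewrite <- (sumR_filter_zero (P v) pos (seq 1 N)).
      - apply sumR_perm. apply NoDup_Permutation; [exact ND| apply NoDup_filter, seq_NoDup|].
        intro x. rewrite filter_In, in_seq, Hin. unfold pos, inV.
        destruct (Rlt_dec 0 (P v x)); split; intros [H1 H2]; try split; try lia; try lra; try congruence.
      - intros x Hx Hp. apply in_seq in Hx. unfold pos in Hp.
        destruct (Rlt_dec 0 (P v x)); [discriminate|].
        pose proof (Pnn v x Hv ltac:(unfold inV; lia)). lra. }
    assert (Hul : In u l) by (apply Hin; auto).
    destruct (In_nth l u 0%nat Hul) as [k0 [Hk0 Hnth]].
    set (a := sumR (P v) (firstn k0 l)). set (b := sumR (P v) (firstn (S k0) l)).
    assert (Hba : b = a + P v u) by (unfold a, b; rewrite sumR_firstn_S, Hnth; auto).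
    assert (Ha0 : 0 <= a) by (unfold a; change 0 with (sumR (P v) (firstn 0 l));
      apply sumR_firstn_mono; auto; lia).
    assert (Hb1 : b <= 1) by (rewrite <- Htot; apply sumR_firstn_le; auto).
    assert (Hiff : forall i, sigma v i = u <-> a <= psi i < b).
    { intro i. destruct (hsigma i) as [k [Hk [Hs [H1 H2]]]]. split.
      - intro E. assert (k = k0).
        { apply (proj1 (NoDup_nth l 0%nat) ND); auto. congruence. }
        subst k. unfold a, b. auto.
      - intros [H3 H4]. destruct (Nat.lt_total k k0) as [Hlt|[Heq|Hgt]].
        + pose proof (sumR_firstn_mono (P v) l Hnn (S k) k0 Hlt). unfold a in H3. lra.
        + subst. rewrite Hs. auto.
        + pose proof (sumR_firstn_mono (P v) l Hnn (S k0) k Hgt). unfold b in H4. lra. }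
    assert (HI : Icount (sigma v) u z z' = cntab z (z' - z) a b).
    { unfold Icount, cntab. f_equal. apply filter_ext. intro j.
      destruct (Nat.eqb_spec (sigma v j) u) as [E|E].
      - symmetry. apply inab_spec, Hiff, E.
      - symmetry. destruct (inab a b (psi j)) eqn:E2; auto.
        apply inab_spec, Hiff in E2. contradiction. }
    rewrite HI.
    pose proof (cntab_split a b z (z' - z) ltac:(lra)) as Hs.
    pose proof (mainD a b ltac:(lra) ltac:(lra) (z' - z) z) as Hm.
    unfold Dv in Hm. rewrite Hs, plus_INR in Hm.
    replace (INR (cntab z (z' - z) a b) - INR (z' - z) * P v u) with
      (INR (cntab z (z' - z) a b) + INR (cntlt z (z' - z) a) - INR (z' - z) * b -
        (INR (cntlt z (z' - z) a) - INR (z' - z) * a)) by (rewrite Hba; ring).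
    exact Hm.
  - assert (HP0 : P v u = 0) by (pose proof (Pnn v u Hv Hu); lra).
    assert (HI : Icount (sigma v) u z z' = 0%nat).
    { unfold Icount. rewrite filter_false_nil; [reflexivity|].
      intros j _. destruct (Nat.eqb_spec (sigma v j) u) as [E|E]; auto.
      exfalso. destruct (hsigma j) as [k [Hk [Hs _]]].
      pose proof (nth_In l 0%nat Hk). rewrite <- Hs, E in H. apply Hin in H. lra. }
    rewrite HI, HP0. simpl INR. rewrite Rmult_0_r, Rminus_0_r, Rabs_R0.
    pose proof (lg_nonneg (INR (z' - z) + 1) ltac:(pose proof (pos_INR (z'-z)); lra)). lra.
Qed.
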